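(* Let $p$ be an odd prime, $n\geq 2$, $1\leq s\leq p-1$, and $t$ an integer with $sp^{n-2}\leq t\leq p^{n-1}-1$. Then $\frac{(sp^{n-2})!}{t!}{t \brace sp^{n-2}}_{\leq p-1}\in\mathbb{Z}_{(p)}$ and \[\frac{(sp^{n-2})!}{t!}{t \brace sp^{n-2}}_{\leq p-1}\equiv \begin{cases}0 \pmod p, & \text{if } p^{n-2}\nmid t,\\ \frac{s!}{(t/p^{n-2})!}{t/p^{n-2} \brace s}\pmod p, & \text{if } p^{n-2}\mid t.\end{cases}\]
   Context: ${N \brace k}$ denotes the Stirling number of the second kind (number of partitions of an $N$-set into $k$ nonempty blocks). For $r\ge1$, the restricted Stirling number ${N \brace k}_{\leq r}$ is $\sum \frac{N!}{\prod_{m=1}^r j_m!(m!)^{j_m}}$ over $(j_1,\dots,j_r)\in\mathbb{N}^r$ with $\sum j_m=k$, $\sum m j_m=N$ (number of partitions of an $N$-set into $k$ nonempty blocks of size at most $r$). Congruences are in $\mathbb{Z}_{(p)}$. *)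

(* Defs.v *)
From mathcomp Require Import all_boot all_order all_algebra.
Set Implicit Arguments. Unset Strict Implicit. Unset Printing Implicit Defensive.
Import Order.TTheory GRing.Theory Num.Theory.
Local Open Scope ring_scope.

Fixpoint stirling2 (N k : nat) : nat :=
  match N, k with
  | 0, 0 => 1
  | 0, _.+1 => 0
  | _.+1, 0 => 0
  | N'.+1, k'.+1 => (k'.+1 * stirling2 N' k + stirling2 N' k')%N
  end.

(* Index m : 'I_r stands for block size m+1;
   each j_m ranges over 0..N, which loses nothing since m j_m <= N. *)
Definition rstirling (r N k : nat) : rat :=
  \sum_(j : {ffun 'I_r -> 'I_N.+1} |
          ((\sum_(m < r) (j m : nat) == k)%N &&
           (\sum_(m < r) (m.+1 * j m) == N)%N))
    (N`!)%:R / \prod_(m < r) (((j m : nat)`!)%:R * ((m.+1)`!)%:R ^+ (j m : nat)).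

Definition pint (p : nat) (x : rat) : bool := ~~ (p%:Z %| denq x)%Z.

Definition pcong (p : nat) (x y : rat) : bool := pint p ((x - y) / p%:R).

(* Main.v *)
Require Import Defs.
From mathcomp Require Import all_boot all_order all_algebra all_field.
From mathcomp Require Import zify ring.
Import Order.TTheory GRing.Theory Num.Theory.
Local Open Scope ring_scope.

Section Comb.
Variables (r Bm : nat) (w : 'I_r -> rat).
Local Notation J := {ffun 'I_r -> 'I_Bm.+1}.

Definition cnd k N (j : J) : bool :=
  ((\sum_(m < r) (j m : nat) == k)%N && (\sum_(m < r) (m.+1 * j m) == N)%N).
Definition gw (m : 'I_r) (a : nat) : rat := w m ^+ a / (a`!)%:R.
Definition Cs k N := \sum_(j : J | cnd k N j) \prod_(m < r) gw m (j m).
Definition decf (m : 'I_r) (j : J) : J :=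
  [ffun i => if i == m then inord (j i).-1 else j i].
Definition incf (m : 'I_r) (j : J) : J :=
  [ffun i => if i == m then inord (j i).+1 else j i].

Lemma decfE m j i : decf m j i = if i == m then inord (j i).-1 else j i.
Proof. by rewrite ffunE. Qed.

Lemma sum_split (m : 'I_r) (c : 'I_r -> nat) (j : J) :
  (\sum_(i < r) c i * j i = c m * j m + \sum_(i < r | i != m) c i * j i)%N.
Proof. by rewrite (bigD1 m). Qed.

Lemma sum_split_dec (m : 'I_r) (c : 'I_r -> nat) (j : J) :
  (\sum_(i < r) c i * decf m j i = c m * (j m).-1 + \sum_(i < r | i != m) c i * j i)%N.
Proof.
rewrite (bigD1 m) //= ffunE eqxx inordK; last first.
  by have := ltn_ord (j m); lia.
congr (_ + _)%N; apply: eq_bigr => i /negPf im; by rewrite ffunE im.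
Qed.

Lemma cnd_bound k N j (m : 'I_r) : cnd k N j -> (m.+1 * j m <= N)%N.
Proof.
case/andP=> _ /eqP <-; rewrite (sum_split m (fun i => i.+1)); lia.
Qed.

Arguments cnd_bound {k N j}.

Lemma reindex_dec (m : 'I_r) k N (F : J -> rat) :
  (m.+1 <= N)%N -> (N <= Bm)%N ->
  \sum_(j | cnd k.+1 N j && (0 < j m)%N) F (decf m j) =
  \sum_(j | cnd k (N - m.+1)%N j) F j.
Proof.
move=> mN NB; symmetry.
rewrite (reindex_onto (decf m) (incf m)); last first.
  move=> j cj; apply/ffunP => i; rewrite !ffunE.
  case: eqP => [->|_]; last by [].
  rewrite inordK /=; first exact: inord_val.
  by have := cnd_bound m cj; have := ltn_ord (j m); nia.
apply: eq_bigl => j.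
have jmB := ltn_ord (j m).
have [j0|jpos] := posnP (j m).
  rewrite andbF; apply/negbTE; apply/negP => /andP [_ /eqP].
  move/ffunP => /(_ m); rewrite !ffunE eqxx => /(congr1 val).
  rewrite j0 /= !inordK //=; [by rewrite j0 | lia].
have -> : (incf m (decf m j) == j) = true.
  apply/eqP/ffunP => i; rewrite !ffunE; case: eqP => [->|_] //.
  by apply: val_inj; rewrite /= !inordK ?prednK // ltnW.
rewrite andbT /cnd.
have e1 := sum_split m (fun _ => 1%N) j.
have e2 := sum_split_dec m (fun _ => 1%N) j.
have e3 := sum_split m (fun i => i.+1) j.
have e4 := sum_split_dec m (fun i => i.+1) j.
have e1' : (\sum_(i < r) (j i : nat) = \sum_(i<r) 1 * j i)%N by apply: eq_bigr => i _; rewrite mul1n.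
have e2' : (\sum_(i < r) (decf m j i : nat) = \sum_(i<r) 1 * decf m j i)%N by apply: eq_bigr => i _; rewrite mul1n.
have hp := prednK jpos.
rewrite e1' e2' e1 e2 e3 e4.
rewrite !andbT -hp /=; set a := (j m).-1; apply/idP/idP => /andP [/eqP h1 /eqP h2]; apply/andP; split; apply/eqP; nia.
Qed.


Lemma gw_succ m a : gw m a.+1 *+ a.+1 = w m * gw m a.
Proof.
rewrite /gw factS natrM exprS -mulr_natr.
have h1 : (a.+1%:R : rat) != 0 by rewrite pnatr_eq0.
have h2 : ((a`!)%:R : rat) != 0 by rewrite pnatr_eq0 -lt0n fact_gt0.
field. by rewrite h2 addrC natr1 h1.
Qed.

Lemma prod_dec m (j : J) : (0 < j m)%N ->
  (\prod_(i < r) gw i (j i)) *+ j m = w m * \prod_(i < r) gw i (decf m j i).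
Proof.
move=> jp; rewrite (bigD1 m) //= [X in _ = _ * X](bigD1 m) //= decfE eqxx inordK; last first.
  by have := ltn_ord (j m); lia.
rewrite [X in _ = _ * (_ * X)](eq_bigr (fun i => gw i (j i))); last first.
  by move=> i /negPf im; rewrite decfE im.
rewrite -mulrnAl mulrA; congr (_ * _).
by move: jp; case: (nat_of_ord (j m)) => // a _; rewrite gw_succ.
Qed.

Lemma Cs_rec k N : (N <= Bm)%N ->
  Cs k.+1 N *+ k.+1 = \sum_(m < r) w m * (if (m.+1 <= N)%N then Cs k (N - m.+1)%N else 0).
Proof.
move=> NB; rewrite /Cs -sumrMnl.
rewrite (eq_bigr (fun j : J => \sum_(m < r) (\prod_(i < r) gw i (j i)) *+ j m)); last first.
  by move=> j /andP [/eqP <- _]; rewrite sumrMnr.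
rewrite exchange_big /=; apply: eq_bigr => m _.
rewrite (bigID (fun j : J => 0 < j m)%N) /= [X in _ + X]big1 ?addr0; last first.
  by move=> j /andP [_]; rewrite -eqn0Ngt => /eqP ->; rewrite mulr0n.
rewrite (eq_bigr (fun j : J => w m * \prod_(i < r) gw i (decf m j i))); last first.
  by move=> j /andP [_ jp]; rewrite prod_dec.
rewrite -mulr_sumr; case: ifP => mN.
  by rewrite (reindex_dec _ _ _ (fun j : J => \prod_(i < r) gw i (j i))).
rewrite big1 ?mulr0 // => j /andP [cj jp].
have := cnd_bound m cj; move/negbT: mN; nia.
Qed.

Definition Ep : {poly rat} := \sum_(m < r) w m *: 'X^(m.+1).

Lemma cnd0 N (j : J) : cnd 0 N j = (N == 0)%N && (j == [ffun => ord0]).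
Proof.
apply/idP/idP.
  case/andP => h1 /eqP h2.
  have hj : forall i, (j i : nat) = 0%N.
    move=> i; move: h1; rewrite sum_nat_eq0 => /forallP /(_ i) /implyP /(_ isT) /eqP //.
  apply/andP; split.
    by rewrite -h2 big1 // => i _; rewrite hj muln0.
  by apply/eqP/ffunP => i; apply: val_inj; rewrite ffunE /= hj.
case/andP => /eqP -> /eqP ->; rewrite /cnd.
by rewrite !big1 // => i _; rewrite ffunE ?muln0.
Qed.

Lemma Cs_poly k N : (N <= Bm)%N -> Cs k N * (k`!)%:R = (Ep ^+ k)`_N.
Proof.
elim: k N => [|k IH] N NB.
  rewrite expr0 coef1 mulr1 /Cs (eq_bigl _ _ (cnd0 N)).
  case: N NB => [|N'] NB /=; last by rewrite big_pred0.
  rewrite (big_pred1_eq _ [ffun => ord0]).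
  by rewrite big1 // => i _; rewrite ffunE /gw expr0 div1r invr1.
rewrite factS natrM mulrA [Cs k.+1 N * _]mulr_natr Cs_rec // mulr_suml exprS mulr_suml coef_sum.
apply: eq_bigr => m _.
rewrite -scalerAl coefZ coefXnM -mulrA; congr (_ * _).
case: ifP => mN /=; rewrite ltnNge mN /= ?mul0r //.
by rewrite IH //; lia.
Qed.

End Comb.


Section Fp.
Variable p : nat.
Hypothesis pr : prime p.

Lemma Fp_fermat (x : 'F_p) : x ^+ p = x.
Proof. by have := expf_card x; rewrite card_Fp. Qed.

Lemma Fp_fermatX (x : 'F_p) m : x ^+ (p ^ m) = x.
Proof.
elim: m => [|m IH]; first by rewrite expn0 expr1.
by rewrite expnSr exprM IH Fp_fermat.
Qed.

Lemma pchar_polyFp : p \in [pchar {poly 'F_p}].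
Proof. by rewrite pchar_poly pchar_Fp. Qed.

Lemma frob_poly (f : {poly 'F_p}) : f ^+ p = f \Po 'X^p.
Proof.
rewrite comp_polyE.
rewrite -{1}[f]coefK poly_def.
rewrite -(pFrobenius_autE pchar_polyFp) rmorph_sum /=.
apply: eq_bigr => i _.
by rewrite pFrobenius_autE exprZn Fp_fermat -!exprM mulnC.
Qed.

Lemma frob_polyX (f : {poly 'F_p}) m : f ^+ (p ^ m) = f \Po 'X^(p ^ m).
Proof.
elim: m => [|m IH]; first by rewrite expn0 expr1 comp_polyXr.
rewrite expnSr exprM IH frob_poly -comp_polyA comp_Xn_poly -exprM mulnC.
by [].
Qed.

Lemma comp_polyXn_exp (f g : {poly 'F_p}) s : (f \Po g) ^+ s = (f ^+ s) \Po g.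
Proof.
elim: s => [|s IH]; first by rewrite !expr0 comp_polyC.
by rewrite !exprS comp_polyM IH.
Qed.

Lemma Fp_int0 (z : int) : (z%:~R : 'F_p) = 0 -> (p%:Z %| z)%Z.
Proof.
case: z => n.
  move=> h; rewrite dvdzE /=; rewrite (dvdn_pcharf (pchar_Fp pr)); apply/eqP; exact: h.
rewrite NegzE mulrNz => /eqP; rewrite oppr_eq0 => /eqP h.
rewrite dvdzE /= (dvdn_pcharf (pchar_Fp pr)). by apply/eqP; rewrite -h pmulrn.
Qed.

End Fp.


Section Stir.
Variable r : nat.
Definition wf (m : 'I_r) : rat := ((m.+1)`!%:R)^-1.
Local Notation E := (@Ep r wf).

Lemma coefE i : E`_i = if (0 < i <= r)%N then ((i`!)%:R)^-1 else 0.
Proof.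
rewrite /Ep coef_sumMXn.
case: i => [|i] /=; first by rewrite big_pred0.
case: ltnP => ir.
  rewrite (big_pred1 (Ordinal ir)) // => m /=.
rewrite big_pred0 // => m /=; rewrite eqSS; apply/negbTE.
by apply/eqP => h; have := ltn_ord m; lia.
Qed.

Lemma derivE i : (i < r)%N -> E^`()`_i = (1 + E)`_i.
Proof.
move=> ir; rewrite coef_deriv coefD coef1 !coefE ir /=.
case: i ir => [|i] ir /=.
  by rewrite addr0 mulr1n /= invr1.
have -> : (i < r)%N by lia.
rewrite add0r [(i.+2)`!]factS natrM -mulr_natr. field. by rewrite pnatr_eq0 -lt0n fact_gt0 -natrD pnatr_eq0.
Qed.

Lemma keyrec s u : (u < r)%N ->
  (E ^+ s.+1)`_u.+1 *+ u.+1 = ((E ^+ s)`_u + (E ^+ s.+1)`_u) *+ s.+1.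
Proof.
move=> ur; rewrite -coef_deriv deriv_exp /= coefMn; congr (_ *+ _).
rewrite coefM.
rewrite (eq_bigr (fun j : 'I_u.+1 => (1 + E)`_j * (E ^+ s)`_(u - j))); last first.
  move=> j _; rewrite derivE //; have := ltn_ord j; lia.
by rewrite -coefM mulrDl mul1r exprS coefD.
Qed.

Lemma stir s u : (u <= r)%N -> (E ^+ s)`_u * (u`!)%:R = (s`!)%:R * (stirling2 u s)%:R.
Proof.
elim: u s => [|u IH] s ur.
  have h : forall s, (E ^+ s)`_0 = (s == 0)%:R.
    elim=> [|s' IH']; first by rewrite expr0 coef1.
    by rewrite exprS coef0M IH' coefE /= mul0r.
  by rewrite h; case: s => [|s] /=; rewrite ?fact0 ?mulr1 ?mul1r ?mulr0 ?mul0r.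
case: s => [|s].
  by rewrite expr0 coef1 /= mul0r mulr0.
have h := keyrec s u ur.
have e1 := IH s (ltnW ur); have e2 := IH s.+1 (ltnW ur).
rewrite [(u.+1)`!]factS natrM mulrA [_ * u.+1%:R]mulr_natr h -[X in X * _ = _]mulr_natr mulrAC mulrDl e1 e2 /=.
rewrite [(s.+1)`!]factS !natrM natrD natrM. ring.
Qed.
End Stir.


Lemma pint_frac p (a d : int) : prime p -> ~~ (p%:Z %| d)%Z -> pint p (a%:~R / d%:~R).
Proof.
move=> pr; rewrite /pint; case: divqP => [d0|k x kn0].
  by rewrite dvdz0.
by apply: contra => h; apply: dvdz_mull.
Qed.

Lemma nfact p m : prime p -> (m < p)%N -> ~~ (p %| m`!)%N.
Proof.
move=> pr; elim: m => [|m IH] mp.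
  by rewrite fact0 dvdn1; apply/eqP => h; move: pr; rewrite h.
rewrite factS Euclid_dvdM // negb_or IH ?andbT; last by lia.
by apply/negP => /(dvdn_leq (ltn0Sn _)); lia.
Qed.

Lemma fact_dvd m n : (m <= n)%N -> (m`! %| n`!)%N.
Proof. by move=> mn; rewrite -(bin_fact mn) dvdn_mull // dvdn_mulr. Qed.

Definition Pz (r : nat) : {poly int} :=
  \sum_(m < r) ((r`! %/ (m.+1)`!)%N%:Z) *: 'X^(m.+1).

Lemma mapPz r : map_poly (intr : int -> rat) (Pz r) = (r`!)%:R *: Ep r (wf r).
Proof.
apply/polyP => i; rewrite coef_map coefZ /Pz /Ep !coef_sumMXn /=.
rewrite rmorph_sum mulr_sumr; apply: eq_bigr => m _.
rewrite /= -pmulrn natr_div ?unitfE ?pnatr_eq0 -?lt0n ?fact_gt0 //.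
by apply: fact_dvd; have := ltn_ord m; lia.
Qed.

Lemma coefPz r j i : (((Pz r) ^+ j)`_i)%:~R = ((r`!)%:R ^+ j * (Ep r (wf r) ^+ j)`_i : rat).
Proof.
have h : forall P : {poly int}, map_poly (intr : int -> rat) (P ^+ j) = (map_poly intr P) ^+ j.
  by move=> P; rewrite rmorphXn.
transitivity ((map_poly (intr : int -> rat) (Pz r ^+ j))`_i); first by rewrite coef_map.
by rewrite h mapPz exprZn coefZ.
Qed.

Lemma rst_Cs r t k : rstirling r t k = (t`!)%:R * Cs r t (wf r) k t.
Proof.
rewrite /rstirling /Cs mulr_sumr; apply: eq_bigr => j _.
rewrite -prodfV; congr (_ * _); apply: eq_bigr => m _.
by rewrite /gw /wf invfM exprVn mulrC.
Qed.

Lemma coefFp p (P : {poly int}) j i :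
  ((P ^+ j)`_i)%:~R = ((map_poly (intr : int -> 'F_p) P) ^+ j)`_i.
Proof.
have h : forall P : {poly int}, map_poly (intr : int -> 'F_p) (P ^+ j) = (map_poly intr P) ^+ j.
  by move=> Q; rewrite rmorphXn.
transitivity ((map_poly (intr : int -> 'F_p) (P ^+ j))`_i); first by rewrite coef_map.
by rewrite h.
Qed.

Theorem lemma3p14 (p n s t : nat) :
  prime p -> odd p -> (2 <= n)%N -> (1 <= s <= p - 1)%N ->
  (s * p ^ (n - 2) <= t <= p ^ (n - 1) - 1)%N ->
  pint p (((s * p ^ (n - 2))`!)%:R / (t`!)%:R * rstirling (p - 1) t (s * p ^ (n - 2)))
  /\
  (if (p ^ (n - 2) %| t)%N then
     pcong p (((s * p ^ (n - 2))`!)%:R / (t`!)%:R * rstirling (p - 1) t (s * p ^ (n - 2)))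
             ((s`!)%:R / ((t %/ p ^ (n - 2))`!)%:R * (stirling2 (t %/ p ^ (n - 2)) s)%:R)
   else
     pcong p (((s * p ^ (n - 2))`!)%:R / (t`!)%:R * rstirling (p - 1) t (s * p ^ (n - 2))) 0).
Proof.
move=> pr _ n2 /andP [s1 sp] /andP [kt tp].
have p0 : (0 < p)%N by apply: prime_gt0.
have q0 : (0 < p ^ (n - 2))%N by rewrite expn_gt0 p0.
set q := (p ^ (n - 2))%N in q0 kt tp *.
set k := (s * q)%N in kt *.
set r := (p - 1)%N in sp *.
set D := r`!.
have Dn0 : (D%:R : rat) != 0 by rewrite pnatr_eq0 -lt0n fact_gt0.
have tn0 : ((t`!)%:R : rat) != 0 by rewrite pnatr_eq0 -lt0n fact_gt0.
have pD : ~~ (p %| D)%N by apply: nfact; lia.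
set A := ((Pz r ^+ k)`_t).
have hQ : (k`!)%:R / (t`!)%:R * rstirling r t k = A%:~R / ((D ^ k)%N%:Z)%:~R.
  rewrite rst_Cs /A coefPz -(@Cs_poly r t (wf r) k t (leqnn t)) -pmulrn natrX.
  by field; rewrite expf_neq0.
have pDk : ~~ (p%:Z %| (D ^ k)%N%:Z)%Z.
  by rewrite dvdzE /= Euclid_dvdX // negb_and pD.
have pn0 : (p%:R : rat) != 0 by rewrite pnatr_eq0 -lt0n.
split; first by rewrite hQ; apply: pint_frac.
rewrite /pcong hQ.
have hF : ((A%:~R : 'F_p)) = ((map_poly (intr : int -> 'F_p) (Pz r)) ^+ s \Po 'X^q)`_t.
  by rewrite /A coefFp /k exprM frob_polyX.
rewrite coef_comp_poly_Xn // in hF.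
case: ifP hF => qt hF; last first.
  have := Fp_int0 p pr _ hF; rewrite dvdz_eq => /eqP hA.
  set A' := (A %/ p)%Z in hA.
  rewrite subr0 -hA intrM.
  have -> : A'%:~R * (p%:Z)%:~R / ((D ^ k)%N%:Z)%:~R / p%:R = A'%:~R / ((D ^ k)%N%:Z)%:~R :> rat.
    rewrite -!pmulrn natrX; field.
    by rewrite expf_neq0 // pn0.
  by apply: pint_frac.
set u := (t %/ q)%N in hF *.
have ur : (u <= r)%N.
  have : (u < p)%N.
    rewrite ltn_divLR // /q -expnS.
    have -> : (n - 2).+1 = (n - 1)%N by lia.
    have : (0 < p ^ (n - 1))%N by rewrite expn_gt0 p0.
    lia.
  lia.
have hst := stir r s u ur.
have hInt : ((Pz r ^+ s)`_u * (u`!)%N%:Z = ((D ^ s * s`! * stirling2 u s)%N)%:Z)%R.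
  apply: (intr_inj (R := rat)).
  rewrite intrM coefPz -!pmulrn !natrM natrX -!mulrA; congr (_ * _); exact: hst.

set Z := (A * (u`!)%N%:Z - ((D ^ k * s`! * stirling2 u s)%N)%:Z)%R.
have hZF : (Z%:~R : 'F_p) = 0.
  rewrite /Z intrB intrM hF -coefFp -intrM hInt -!pmulrn !natrM !natrX.
  by rewrite /k mulnC exprM Fp_fermatX // subrr.
have := Fp_int0 p pr _ hZF; rewrite dvdz_eq => /eqP hZ.
set Z' := (Z %/ p)%Z in hZ.
have hZr : (Z'%:~R : rat) * p%:R = A%:~R * (u`!)%:R - ((D ^ k * s`! * stirling2 u s)%N)%:R.
  move: (congr1 (intr : int -> rat) hZ); rewrite /Z !intrM intrB intrM -!pmulrn => ->; by [].
have -> : (A%:~R / ((D ^ k)%N%:Z)%:~R - (s`!)%:R / (u`!)%:R * (stirling2 u s)%:R) / p%:R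
   = Z'%:~R / (((D ^ k) * u`!)%N%:Z)%:~R :> rat.
  have hZr' : (Z'%:~R : rat) = (A%:~R * (u`!)%:R - ((D ^ k * s`! * stirling2 u s)%N)%:R) / p%:R.
    by rewrite -hZr mulfK.
  rewrite hZr' -!pmulrn !natrM !natrX.
  field.
  by rewrite pnatr_eq0 -lt0n fact_gt0 expf_neq0 // pn0.
apply: pint_frac => //.
by rewrite dvdzE /= Euclid_dvdM // negb_or Euclid_dvdX // negb_and pD nfact //; lia.
Qed.
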